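(* Assume $\diamondsuit^+$. If $G$ is an undirected graph with $|V(G)|=\omega_1$, then $\vec\chi(G)=\omega_1$ if and only if $\chi(G)=\omega_1$.
   Context: $\diamondsuit^+$ is the statement that there are countable families $\mathcal S_\beta\subseteq\mathcal P(\beta)$, $\beta<\omega_1$, such that for every $X\subseteq\omega_1$ there is a club $C\subseteq\omega_1$ with $X\cap\beta,C\cap\beta\in\mathcal S_\beta$ for all $\beta\in C$. $\chi(G)$ is the chromatic number. $\vec\chi(G)=\sup\{\chi(D):D$ an orientation of $G\}$, where an orientation of $G$ is a digraph on $V(G)$ containing, for each edge $uv$ of $G$, exactly one of the arcs $uv,vu$ and no other arcs, and $\chi(D)$ (the dichromatic number) is the minimal number of acyclic vertex sets (sets inducing no directed cycle) covering $V(D)$. *)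

(* Defs.v *)
From Stdlib Require Import List.
Import ListNotations.

Definition countable (T : Type) : Prop :=
  exists f : T -> nat, forall x y, f x = f y -> x = y.

Definition injective_fun {A B : Type} (f : A -> B) : Prop :=
  forall x y, f x = f y -> x = y.

Definition bijective_fun {A B : Type} (f : A -> B) : Prop :=
  injective_fun f /\ forall b, exists a, f a = b.

Definition card_lt (K W : Type) : Prop :=
  (exists f : K -> W, injective_fun f) /\ ~ (exists g : W -> K, injective_fun g).

Record is_omega1 (W : Type) (lt : W -> W -> Prop) : Prop := {
  om_irrefl : forall a, ~ lt a a;
  om_trans  : forall a b c, lt a b -> lt b c -> lt a c;
  om_total  : forall a b, lt a b \/ a = b \/ lt b a;
  om_wf     : well_founded lt;
  om_uncountable : ~ countable W;
  om_segments_countable : forall b, countable {a : W | lt a b}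
}.

Definition club {W : Type} (lt : W -> W -> Prop) (C : W -> Prop) : Prop :=
  (forall a, exists c, C c /\ lt a c) /\
  (forall b, (exists c, C c /\ lt c b) ->
             (forall a, lt a b -> exists c, C c /\ lt a c /\ lt c b) ->
             C b).

(* diamond^+ : countable families S_beta (enumerated as S beta n, n : nat) of
   subsets of beta such that every X has a club C with X ∩ beta, C ∩ beta in
   S_beta for all beta in C. *)
Definition diamond_plus (W : Type) (lt : W -> W -> Prop) : Prop :=
  exists S : W -> nat -> (W -> Prop),
    (forall b n a, S b n a -> lt a b) /\
    forall X : W -> Prop, exists C : W -> Prop,
      club lt C /\
      forall b, C b ->
        (exists n, forall a, S b n a <-> (X a /\ lt a b)) /\
        (exists n, forall a, S b n a <-> (C a /\ lt a b)).

Definition undirected_graph {V : Type} (G : V -> V -> Prop) : Prop :=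
  (forall u v, G u v -> G v u) /\ (forall v, ~ G v v).

Definition colorable_by {V : Type} (G : V -> V -> Prop) (K : Type) : Prop :=
  exists c : V -> K, forall u v, G u v -> c u <> c v.

Definition chi_eq {V : Type} (G : V -> V -> Prop) (W : Type) : Prop :=
  colorable_by G W /\ forall K : Type, card_lt K W -> ~ colorable_by G K.

Definition orientation {V : Type} (G D : V -> V -> Prop) : Prop :=
  (forall u v, D u v -> G u v) /\
  (forall u v, G u v -> (D u v \/ D v u) /\ ~ (D u v /\ D v u)).

Fixpoint dpath {V : Type} (D : V -> V -> Prop) (x : V) (l : list V) : Prop :=
  match l with
  | [] => True
  | y :: l' => D x y /\ dpath D y l'
  end.

Definition has_dcycle_in {V : Type} (D : V -> V -> Prop) (A : V -> Prop) : Prop :=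
  exists (x : V) (l : list V),
    NoDup (x :: l) /\ Forall A (x :: l) /\ dpath D x l /\ D (last l x) x.

Definition acyclic_set {V : Type} (D : V -> V -> Prop) (A : V -> Prop) : Prop :=
  ~ has_dcycle_in D A.

Definition dicolorable_by {V : Type} (D : V -> V -> Prop) (K : Type) : Prop :=
  exists F : K -> (V -> Prop),
    (forall k, acyclic_set D (F k)) /\ (forall v, exists k, F k v).

(* vec-chi(G) = sup over orientations D of chi(D) equals |W|:
   |W| is an upper bound and no smaller cardinal is an upper bound. *)
Definition vec_chi_eq {V : Type} (G : V -> V -> Prop) (W : Type) : Prop :=
  (forall D, orientation G D -> dicolorable_by D W) /\
  (forall K : Type, card_lt K W ->
     exists D, orientation G D /\ ~ dicolorable_by D K).

(* Main.v *)
Require Import Defs.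
From Stdlib Require Import List Classical ClassicalEpsilon FunctionalExtensionality PropExtensionality Cantor Lia PeanoNat Inverse_Image.
Import ListNotations.

Section Om.
Context (T : Type) (lt : T -> T -> Prop) (HT : is_omega1 T lt).

Definition le a b := lt a b \/ a = b.

Lemma lt_irr a : ~ lt a a. Proof. exact (om_irrefl _ _ HT a). Qed.
Lemma lt_tr a b c : lt a b -> lt b c -> lt a c. Proof. exact (om_trans _ _ HT a b c). Qed.
Lemma nlt_le a b : ~ lt a b -> le b a.
Proof. intro H. destruct (om_total _ _ HT a b) as [h|[h|h]]; [contradiction| right; auto | left; auto]. Qed.
Lemma le_lt_tr a b c : le a b -> lt b c -> lt a c.
Proof. intros [h|h] h'; [eapply lt_tr; eauto| subst; auto]. Qed.
Lemma lt_le_tr a b c : lt a b -> le b c -> lt a c.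
Proof. intros h [h'|h']; [eapply lt_tr; eauto| subst; auto]. Qed.
Lemma le_tr a b c : le a b -> le b c -> le a c.
Proof. intros [h|h] h'; [left; eapply lt_le_tr; eauto | subst; auto]. Qed.
Lemma le_nlt a b : le a b -> ~ lt b a.
Proof. intros h h'. apply (lt_irr a). eapply le_lt_tr; eauto. Qed.
Lemma lt_neq a b : lt a b -> a <> b.
Proof. intros h e; subst; apply (lt_irr b h). Qed.
Lemma le_refl a : le a a. Proof. right; auto. Qed.
Lemma le_total a b : le a b \/ le b a.
Proof. destruct (om_total _ _ HT a b) as [h|[h|h]]; [left;left;auto|left;right;auto|right;left;auto]. Qed.

Lemma wf_min (P : T -> Prop) : (exists x, P x) -> exists m, P m /\ forall y, P y -> ~ lt y m.
Proof.
  intros [x Hx]. revert Hx. induction x as [x IH] using (well_founded_ind (om_wf _ _ HT)).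
  intro Hx. destruct (classic (exists y, P y /\ lt y x)) as [[y [Py Hy]]|N].
  - exact (IH y Hy Py).
  - exists x. split; auto. intros y Py Hy. apply N; eauto.
Qed.

Lemma T_inh : inhabited T.
Proof.
  destruct (classic (inhabited T)) as [h|h]; auto. exfalso. apply (om_uncountable _ _ HT).
  exists (fun _ => 0). intros x. exfalso; apply h; constructor; exact x.
Qed.

Definition segi (b : T) : T -> nat :=
  let f := proj1_sig (constructive_indefinite_description _ (om_segments_countable _ _ HT b)) in
  fun x => match excluded_middle_informative (lt x b) with
           | left H => f (exist _ x H) | right _ => 0 end.

Lemma segi_inj b x y : lt x b -> lt y b -> segi b x = segi b y -> x = y.
Proof.
  unfold segi. destruct (constructive_indefinite_description _ _) as [f Hf]; simpl.
  intros hx hy. destruct (excluded_middle_informative (lt x b)); [|contradiction].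
  destruct (excluded_middle_informative (lt y b)); [|contradiction].
  intro e. apply Hf in e. apply (f_equal (@proj1_sig _ _)) in e. exact e.
Qed.

Lemma seq_bounded (g : nat -> T) : exists b, forall k, lt (g k) b.
Proof.
  apply NNPP; intro N.
  assert (H : forall a, exists k, le a (g k)).
  { intro a. apply NNPP; intro N2. apply N. exists a. intro k.
    destruct (classic (lt (g k) a)) as [h|h]; auto. exfalso; apply N2; exists k.
    apply nlt_le; auto. }
  apply (om_uncountable _ _ HT).
  set (ka := fun a => epsilon (inhabits 0) (fun k => le a (g k))).
  assert (Hka : forall a, le a (g (ka a))) by (intro a; apply (epsilon_spec (inhabits 0) (fun k => le a (g k))); auto).
  exists (fun a => Cantor.to_nat (ka a, match excluded_middle_informative (lt a (g (ka a))) with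
                                        | left _ => S (segi (g (ka a)) a) | right _ => 0 end)).
  intros x y e. apply (f_equal Cantor.of_nat) in e. rewrite !Cantor.cancel_of_to in e.
  injection e as e1 e2. rewrite <- e1 in e2.
  destruct (excluded_middle_informative (lt x (g (ka x)))) as [hx|hx];
  destruct (excluded_middle_informative (lt y (g (ka x)))) as [hy|hy]; try discriminate.
  - injection e2 as e2. eapply segi_inj; eauto.
  - pose proof (Hka x) as [h|h]; [contradiction|]. pose proof (Hka y) as [h'|h']; rewrite <- e1 in h'; [contradiction|].
    congruence.
Qed.

Lemma incr_mono (g : nat -> T) : (forall k, lt (g k) (g (S k))) -> forall i j, i < j -> lt (g i) (g j).
Proof.
  intros Hg i j h. induction h. apply Hg. eapply lt_tr; eauto.
Qed.

Lemma incr_le (g : nat -> T) : (forall k, lt (g k) (g (S k))) -> forall i j, i <= j -> le (g i) (g j).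
Proof.
  intros Hg i j h. destruct (Nat.eq_dec i j). subst; apply le_refl. left; apply incr_mono; auto; lia.
Qed.

Lemma sup_seq (g : nat -> T) : (forall k, lt (g k) (g (S k))) ->
  exists b, (forall k, lt (g k) b) /\ forall a, lt a b -> exists k, lt a (g k).
Proof.
  intros Hg. destruct (wf_min (fun b => forall k, lt (g k) b) (seq_bounded g)) as [b [Hb Hmin]].
  exists b. split; auto. intros a ha. apply NNPP; intro N.
  apply (Hmin a); auto. intro k. destruct (classic (lt (g k) a)) as [h|h]; auto.
  exfalso; apply N. exists (S k). apply nlt_le in h. eapply le_lt_tr; eauto.
Qed.

Definition closedset (C : T -> Prop) : Prop :=
  forall b, (exists c, C c /\ lt c b) -> (forall a, lt a b -> exists c, C c /\ lt a c /\ lt c b) -> C b.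

Lemma club_closed C : club lt C -> closedset C.
Proof. intros [_ h]; exact h. Qed.

Lemma max_below (C : T -> Prop) x : closedset C -> (exists d, C d /\ le d x) ->
  exists m, C m /\ le m x /\ forall d, C d -> le d x -> le d m.
Proof.
  intros HC [d0 [Cd0 Hd0]].
  destruct (wf_min (fun b => forall d, C d -> le d x -> le d b) (ex_intro _ x (fun d _ h => h))) as [b [Hb Hmin]].
  assert (Hbx : le b x).
  { apply nlt_le. intro h. apply (Hmin x); auto. }
  destruct (classic (C b)) as [Cb|nCb].
  - exists b; auto.
  - exfalso. apply nCb. apply HC.
    + exists d0. split; auto. destruct (Hb d0 Cd0 Hd0) as [h|h]; auto. subst; contradiction.
    + intros a ha. apply NNPP; intro N. apply (Hmin a); auto.
      intros d Cd hd. apply nlt_le. intro had. apply N. exists d. split; auto. split; auto.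
      destruct (Hb d Cd hd) as [h|h]; auto. subst; contradiction.
Qed.

Definition closed_under (R : T -> T -> T -> Prop) (b : T) : Prop :=
  forall u w, lt u b -> lt w b -> (exists y, R u w y) -> exists y, lt y b /\ R u w y.

Lemma closure_club (C : T -> Prop) (R : T -> T -> T -> Prop) :
  club lt C -> club lt (fun b => C b /\ closed_under R b).
Proof.
  intros [HCu HCc].
  pose proof (T_inh) as inh.
  set (dec := fun g p => epsilon inh (fun u => lt u g /\ segi g u = p)).
  assert (Hdec : forall g u, lt u g -> dec g (segi g u) = u).
  { intros g u hu. unfold dec.
    destruct (epsilon_spec inh (fun u' => lt u' g /\ segi g u' = segi g u) (ex_intro _ u (conj hu eq_refl))) as [h1 h2].
    eapply segi_inj; eauto. }
  set (wit := fun u w => epsilon inh (R u w)).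
  set (wseq := fun g j => wit (dec g (fst (Cantor.of_nat j))) (dec g (snd (Cantor.of_nat j)))).
  assert (Hw : forall g u w, lt u g -> lt w g -> (exists y, R u w y) -> exists j, R u w (wseq g j)).
  { intros g u w hu hw he. exists (Cantor.to_nat (segi g u, segi g w)). unfold wseq.
    rewrite Cantor.cancel_of_to. simpl. rewrite !Hdec; auto. unfold wit. apply epsilon_spec; auto. }
  set (bnd := fun g => epsilon inh (fun b => forall j, lt (wseq g j) b)).
  assert (Hbnd : forall g j, lt (wseq g j) (bnd g)).
  { intros g. unfold bnd. apply (epsilon_spec inh (fun b => forall j, lt (wseq g j) b)). apply seq_bounded. }
  set (nxt := fun g => epsilon inh (fun c => C c /\ lt g c /\ lt (bnd g) c)).
  assert (Hnxt : forall g, C (nxt g) /\ lt g (nxt g) /\ lt (bnd g) (nxt g)).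
  { intro g. unfold nxt. apply (epsilon_spec inh (fun c => C c /\ lt g c /\ lt (bnd g) c)).
    destruct (le_total g (bnd g)) as [h|h].
    - destruct (HCu (bnd g)) as [c [Cc hc]]. exists c. split; auto. split; auto. eapply le_lt_tr; eauto.
    - destruct (HCu g) as [c [Cc hc]]. exists c. split; auto. split; auto. eapply le_lt_tr; eauto. }
  split.
  - intro a. set (g := fun k => Nat.iter k nxt a).
    assert (Hg : forall k, lt (g k) (g (S k))) by (intro k; apply Hnxt).
    destruct (sup_seq g Hg) as [b [Hb1 Hb2]].
    exists b. split; [split|].
    + apply HCc.
      * exists (g 1). split; auto. apply Hnxt.
      * intros a' ha'. destruct (Hb2 a' ha') as [k hk]. exists (g (S k)). split; [apply Hnxt|]. split; auto.
        eapply lt_tr; eauto.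
    + intros u w hu hw he. destruct (Hb2 u hu) as [i hi]. destruct (Hb2 w hw) as [j hj].
      assert (hu' : lt u (g (max i j))) by (eapply lt_le_tr; eauto; apply incr_le; auto; lia).
      assert (hw' : lt w (g (max i j))) by (eapply lt_le_tr; eauto; apply incr_le; auto; lia).
      destruct (Hw _ _ _ hu' hw' he) as [j' hj']. exists (wseq (g (max i j)) j'). split; auto.
      eapply lt_tr. apply Hbnd. eapply lt_tr. apply (Hnxt (g (max i j))). apply (Hb1 (S (max i j))).
    + apply (Hb1 0).
  - intros b [c [[Cc _] hc]] Hlim. split.
    + apply HCc. exists c; auto. intros a ha. destruct (Hlim a ha) as [c' [[Cc' _] h]]. exists c'; auto.
    + intros u w hu hw he. destruct (le_total u w) as [h|h].
      * destruct (Hlim w hw) as [c' [[_ Hc'] [h1 h2]]]. destruct (Hc' u w) as [y [hy Ry]]; auto.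
        eapply le_lt_tr; eauto. exists y. split; auto. eapply lt_tr; eauto.
      * destruct (Hlim u hu) as [c' [[_ Hc'] [h1 h2]]]. destruct (Hc' u w) as [y [hy Ry]]; auto.
        eapply le_lt_tr; eauto. exists y. split; auto. eapply lt_tr; eauto.
Qed.
End Om.

Lemma wf_rec {X A : Type} (R : X -> X -> Prop) (wf : well_founded R) (a0 : A)
  (Phi : X -> (X -> A) -> A)
  (Hext : forall x s s', (forall y, R y x -> s y = s' y) -> Phi x s = Phi x s') :
  exists sg : X -> A, forall x, sg x = Phi x sg.
Proof.
  set (F := fun x (rec : forall y, R y x -> A) =>
        Phi x (fun y => match excluded_middle_informative (R y x) with left H => rec y H | right _ => a0 end)).
  exists (Fix wf (fun _ => A) F). intro x. rewrite Fix_eq.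
  - unfold F at 1. apply Hext. intros y Hy. destruct (excluded_middle_informative (R y x)); [auto|contradiction].
  - intros x' f g Hfg. unfold F. f_equal. apply functional_extensionality. intro y.
    destruct (excluded_middle_informative (R y x')); auto.
Qed.

Section Core.
Context (T : Type) (lt : T -> T -> Prop) (HT : is_omega1 T lt)
  (S : T -> nat -> T -> Prop) (HS1 : forall b n a, S b n a -> lt a b)
  (HS2 : forall X : T -> Prop, exists C : T -> Prop, club lt C /\
      forall b, C b -> exists n, forall a, S b n a <-> (X a /\ lt a b))
  (G : T -> T -> Prop) (HG : undirected_graph G).

Definition inh := T_inh T lt HT.
Definition inh2 : inhabited (T * T) := match inh with inhabits t => inhabits (t, t) end.

Definition arc_of (s : T -> T -> bool) a b :=
  G a b /\ ((lt a b /\ s b a = true) \/ (lt b a /\ s a b = false)).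

Definition enum (x : T) (k : nat) : T :=
  match k with 0 => x | Datatypes.S k' => epsilon inh (fun b => lt b x /\ segi T lt HT x b = k') end.

Lemma enum_surj x b : le T lt b x -> exists k, enum x k = b.
Proof.
  intros [h|h].
  - exists (Datatypes.S (segi T lt HT x b)). simpl.
    destruct (epsilon_spec inh (fun b' => lt b' x /\ segi T lt HT x b' = segi T lt HT x b) (ex_intro _ b (conj h eq_refl))) as [h1 h2].
    eapply segi_inj; eauto.
  - exists 0; simpl; auto.
Qed.

Definition Pr (x : T) (j : nat) : T -> Prop :=
  fun a => S (enum x (fst (Cantor.of_nat j))) (snd (Cantor.of_nat j)) a /\ lt a x.

Definition fresh (x : T) (L : list (T * bool)) (j : nat) (a : T) :=
  G x a /\ Pr x j a /\ ~ In a (map fst L).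

Definition pairok x L j (p : T * T) := fresh x L j (fst p) /\ fresh x L j (snd p) /\ fst p <> snd p.

Definition cand s x L j (p : T * T) :=
  pairok x L j p /\ exists y, Pr x j y /\ arc_of s (snd p) y /\ arc_of s y (fst p).

Definition stp_gen (cd : T * T -> Prop) x L j : list (T * bool) :=
  match excluded_middle_informative (exists p, cd p) with
  | left _ => let p := epsilon inh2 cd in (fst p, true) :: (snd p, false) :: L
  | right _ =>
    match excluded_middle_informative (exists p, pairok x L j p) with
    | left _ => let p := epsilon inh2 (pairok x L j) in (fst p, true) :: (snd p, false) :: L
    | right _ => L
    end
  end.

Definition stp s x L j := stp_gen (cand s x L j) x L j.

Fixpoint Lst s x (j : nat) : list (T * bool) :=
  match j with 0 => [] | Datatypes.S j' => stp s x (Lst s x j') j' end.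

Definition Phi (x : T) (s : T -> T -> bool) : T -> bool :=
  fun y => if excluded_middle_informative (exists j, In (y, true) (Lst s x j)) then true else false.

Lemma arc_ext x s s' a b : (forall y, lt y x -> s y = s' y) -> lt a x -> lt b x ->
  arc_of s a b <-> arc_of s' a b.
Proof.
  intros H ha hb. unfold arc_of. rewrite (H a ha), (H b hb). tauto.
Qed.

Lemma cand_ext x s s' L j : (forall y, lt y x -> s y = s' y) -> cand s x L j = cand s' x L j.
Proof.
  intros H. apply functional_extensionality. intros [a b]. apply propositional_extensionality.
  unfold cand, pairok, fresh, Pr. simpl. split; intros [h [y [hy [h1 h2]]]]; split; auto; exists y; split; auto;
  destruct h as [[_ [[_ ha] _]] [[_ [[_ hb] _]] _]]; destruct hy as [_ hy];
  (split; [eapply arc_ext; [| | |eassumption]; eauto; intros; symmetry; auto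
          | eapply arc_ext; [| | |eassumption]; eauto; intros; symmetry; auto]) .
Qed.

Lemma Phi_ext x s s' : (forall y, lt y x -> s y = s' y) -> Phi x s = Phi x s'.
Proof.
  intros H. assert (E : forall j, Lst s x j = Lst s' x j).
  { induction j; simpl; auto. rewrite IHj. unfold stp. rewrite (cand_ext x s s' _ j H). reflexivity. }
  unfold Phi. apply functional_extensionality. intro y.
  replace (exists j, In (y, true) (Lst s x j)) with (exists j, In (y, true) (Lst s' x j)); auto.
  apply propositional_extensionality. split; intros [j h]; exists j; rewrite E in *; auto.
Qed.


Lemma stp_cand s x L j : (exists p, cand s x L j p) ->
  exists p, cand s x L j p /\ stp s x L j = (fst p, true) :: (snd p, false) :: L.
Proof.
  intro h. unfold stp, stp_gen. destruct (excluded_middle_informative _); [|contradiction].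
  exists (epsilon inh2 (cand s x L j)). split; auto. apply epsilon_spec; auto.
Qed.

Lemma stp_nocand s x L j : ~ (exists p, cand s x L j p) -> (exists p, pairok x L j p) ->
  exists p, pairok x L j p /\ stp s x L j = (fst p, true) :: (snd p, false) :: L.
Proof.
  intros h h'. unfold stp, stp_gen. destruct (excluded_middle_informative _); [contradiction|].
  destruct (excluded_middle_informative _); [|contradiction].
  exists (epsilon inh2 (pairok x L j)). split; auto. apply epsilon_spec; auto.
Qed.

Lemma stp_gen_cases s x L j : stp s x L j = L \/
  exists p, pairok x L j p /\ stp s x L j = (fst p, true) :: (snd p, false) :: L.
Proof.
  destruct (classic (exists p, cand s x L j p)) as [h|h].
  - right. destruct (stp_cand s x L j h) as [p [[hp _] e]]. eauto.
  - destruct (classic (exists p, pairok x L j p)) as [h'|h'].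
    + right. apply stp_nocand; auto.
    + left. unfold stp, stp_gen. destruct (excluded_middle_informative _); [contradiction|].
      destruct (excluded_middle_informative _); [contradiction|]. auto.
Qed.

Lemma Lst_mono s x j e : In e (Lst s x j) -> In e (Lst s x (Datatypes.S j)).
Proof.
  intro h. simpl. destruct (stp_gen_cases s x (Lst s x j) j) as [e'|[p [_ e']]]; rewrite e'; simpl; auto.
Qed.

Lemma Lst_mono_le s x j j' e : j <= j' -> In e (Lst s x j) -> In e (Lst s x j').
Proof. intros h; induction h; auto. intro; apply Lst_mono; auto. Qed.

Lemma Lst_nodup s x j : NoDup (map fst (Lst s x j)).
Proof.
  induction j; simpl. constructor.
  destruct (stp_gen_cases s x (Lst s x j) j) as [e'|[p [[h1 [h2 h3]] e']]]; rewrite e'; auto.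
  destruct h1 as [_ [_ h1]]. destruct h2 as [_ [_ h2]]. simpl. constructor.
  - simpl. intros [h|h]; auto.
  - constructor; auto.
Qed.

Lemma nodup_fst_uniq (L : list (T * bool)) y b b' : NoDup (map fst L) -> In (y, b) L -> In (y, b') L -> b = b'.
Proof.
  induction L as [|[z c] L IH]; simpl; [tauto|]. intros hn h1 h2. inversion hn; subst.
  destruct h1 as [h1|h1]; destruct h2 as [h2|h2].
  - congruence.
  - injection h1 as -> ->. exfalso; apply H1. change y with (fst (y, b')). apply in_map; auto.
  - injection h2 as -> ->. exfalso; apply H1. change y with (fst (y, b)). apply in_map; auto.
  - eauto.
Qed.

Lemma sg_val (sg : T -> T -> bool) (Hsg : forall x, sg x = Phi x sg) x j y b :
  In (y, b) (Lst sg x j) -> sg x y = b.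
Proof.
  intro h. rewrite Hsg. unfold Phi. destruct (excluded_middle_informative _) as [[j' h']|h'].
  - apply (nodup_fst_uniq (Lst sg x (max j j')) y); [apply Lst_nodup| |];
    eapply Lst_mono_le; try eassumption; lia.
  - destruct b; auto. exfalso; eauto.
Qed.


Lemma arc_orient sg : orientation G (arc_of sg).
Proof.
  destruct HG as [Hsym Hirr]. split.
  - intros u v [h _]; auto.
  - intros u v guv. assert (ne : u <> v) by (intro e; subst; apply (Hirr v guv)).
    unfold arc_of. split.
    + destruct (om_total _ _ HT u v) as [h|[h|h]]; [|contradiction|].
      * destruct (sg v u) eqn:E; [left | right]; split; auto.
      * destruct (sg u v) eqn:E; [right | left]; split; auto.
    + intros [[_ [[h1 h2]|[h1 h2]]] [_ [[h3 h4]|[h3 h4]]]];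
        try (apply (lt_irr T lt HT u); eapply lt_tr; eauto; fail); congruence.
Qed.

Section WithSg.
Context (sg : T -> T -> bool) (Hsg : forall x, sg x = Phi x sg)
  (c : T -> nat) (Hac : forall n, acyclic_set (arc_of sg) (fun v => c v = n)).

Definition D := arc_of sg.

Lemma mk_cycle x a0 b0 y : c a0 = c x -> c b0 = c x -> c y = c x ->
  lt a0 x -> lt b0 x -> lt y x -> G x a0 -> G x b0 -> a0 <> b0 ->
  D b0 y -> D y a0 -> sg x a0 = true -> sg x b0 = false -> False.
Proof.
  intros ca cb cy la lb ly ga gb ne d1 d2 s1 s2. destruct HG as [Hsym Hirr].
  apply (Hac (c x)). exists x, [b0; y; a0]. split; [|split; [|split]].
  - constructor.
    + simpl. intros [e|[e|[e|e]]]; subst; try (eapply lt_irr; eauto; fail); auto.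
    + constructor.
      * simpl. intros [e|[e|e]]; subst; auto. destruct d1 as [g _]; eapply Hirr; eauto.
      * constructor. simpl. intros [e|e]; subst; auto. destruct d2 as [g _]; eapply Hirr; eauto.
        constructor. simpl; auto. constructor.
  - repeat constructor; auto.
  - simpl. split; [|split; [|split]]; auto. split; auto.
  - simpl. split; auto.
Qed.

Definition Rn n u w y := c y = n /\ D u y /\ D y w.

Definition inhP : inhabited (T -> Prop) := inhabits (fun _ => True).

Definition Cl n := epsilon inhP (fun C => club lt C /\ forall b, C b -> exists m, forall a, S b m a <-> (c a = n /\ lt a b)).

Lemma Cl_spec n : club lt (Cl n) /\ forall b, Cl n b -> exists m, forall a, S b m a <-> (c a = n /\ lt a b).
Proof.
  unfold Cl. apply (epsilon_spec inhP (fun C => club lt C /\ forall b, C b -> exists m, forall a, S b m a <-> (c a = n /\ lt a b))).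
  apply HS2.
Qed.

Definition Dn n := fun b => Cl n b /\ closed_under T lt (Rn n) b.

Lemma Dn_club n : club lt (Dn n).
Proof. apply closure_club; auto. apply Cl_spec. Qed.

Lemma key_finite x d : Dn (c x) d -> le T lt d x ->
  exists l, forall y, G x y -> c y = c x -> lt y d -> In y l.
Proof.
  intros [Cld Cud] hd. set (n := c x).
  destruct (proj2 (Cl_spec n) d Cld) as [m Hm].
  destruct (enum_surj x d hd) as [k0 hk0].
  set (j := Cantor.to_nat (k0, m)).
  assert (HP : forall a, Pr x j a <-> c a = n /\ lt a d).
  { intro a. unfold Pr, j. rewrite Cantor.cancel_of_to. simpl. rewrite hk0. split.
    - intros [h1 h2]. apply Hm in h1. tauto.
    - intros [h1 h2]. split; [apply Hm; auto | eapply lt_le_tr; eauto]. }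
  apply NNPP; intro N.
  assert (Hinf : forall l, exists y, G x y /\ c y = n /\ lt y d /\ ~ In y l).
  { intro l. apply NNPP; intro N2; apply N; exists l; intros y h1 h2 h3; apply NNPP; intro h4; apply N2; eauto. }
  set (L := Lst sg x j).
  destruct (Hinf (map fst L)) as [a [ga [ca [la na]]]].
  destruct (Hinf (a :: map fst L)) as [b [gb [cb [lb nb]]]].
  assert (pok : pairok x L j (a, b)).
  { unfold pairok, fresh; simpl. split; [|split].
    - split; auto. split; auto. apply HP; auto.
    - split; auto. split. apply HP; auto. intro; apply nb; right; auto.
    - intro e; apply nb; left; auto. }
  assert (Hlt : forall z, Pr x j z -> c z = c x /\ lt z x).
  { intros z hz. pose proof hz as [_ h]. apply HP in hz. destruct hz. split; auto. }
  destruct (classic (exists p, cand sg x L j p)) as [hc|hc].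
  - destruct (stp_cand sg x L j hc) as [[a0 b0] [[[fa [fb ne]] [y [py [d1 d2]]]] e]]. simpl in *.
    assert (s1 : sg x a0 = true). { apply (sg_val sg Hsg x (Datatypes.S j)). simpl. fold L. rewrite e. left; auto. }
    assert (s2 : sg x b0 = false). { apply (sg_val sg Hsg x (Datatypes.S j)). simpl. fold L. rewrite e. right; left; auto. }
    destruct fa as [ga0 [pa0 _]]. destruct fb as [gb0 [pb0 _]].
    destruct (Hlt _ pa0), (Hlt _ pb0), (Hlt _ py).
    eapply (mk_cycle x a0 b0 y); eauto.
  - destruct (stp_nocand sg x L j hc (ex_intro _ _ pok)) as [[a1 b1] [[fa [fb ne]] e]]. simpl in *.
    assert (s1 : sg x a1 = true). { apply (sg_val sg Hsg x (Datatypes.S j)). simpl. fold L. rewrite e. left; auto. }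
    assert (s2 : sg x b1 = false). { apply (sg_val sg Hsg x (Datatypes.S j)). simpl. fold L. rewrite e. right; left; auto. }
    pose proof fa as [ga1 [pa1 _]]. pose proof fb as [gb1 [pb1 _]].
    pose proof (Hlt _ pa1) as [ca1 la1]. pose proof (Hlt _ pb1) as [cb1 lb1].
    apply HP in pa1. apply HP in pb1.
    assert (da : D a1 x). { split; [apply (proj1 HG); auto | left; auto]. }
    assert (db : D x b1). { split; [auto | right; auto]. }
    destruct (Cud a1 b1 (proj2 pa1) (proj2 pb1) (ex_intro _ x (conj eq_refl (conj da db)))) as [y [ly [cy [d1 d2]]]].
    apply hc. exists (b1, a1). split.
    + split; [auto|split; auto].
    + exists y. simpl. split; auto. apply HP. split; auto.
Qed.


Definition d0 n := epsilon inh (Dn n).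
Lemma d0_spec n : Dn n (d0 n).
Proof.
  unfold d0. apply epsilon_spec. destruct inh as [t]. destruct (proj1 (Dn_club n) t) as [d [h _]]. eauto.
Qed.

Definition kap x : option T :=
  if excluded_middle_informative (exists d, Dn (c x) d /\ le T lt d x)
  then Some (epsilon inh (fun m => Dn (c x) m /\ le T lt m x /\ forall d, Dn (c x) d -> le T lt d x -> le T lt d m))
  else None.

Lemma kap_spec x : (kap x = None /\ forall d, Dn (c x) d -> ~ le T lt d x) \/
  (exists m, kap x = Some m /\ Dn (c x) m /\ le T lt m x /\ forall d, Dn (c x) d -> le T lt d x -> le T lt d m).
Proof.
  unfold kap. destruct (excluded_middle_informative _) as [h|h].
  - right. eexists; split; [reflexivity|]. apply epsilon_spec.
    apply max_below; auto. apply club_closed, Dn_club.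
  - left. split; auto. intros d hd hl; apply h; eauto.
Qed.

Definition bnd' n (o : option T) : T :=
  match o with None => d0 n | Some m => epsilon inh (fun d => Dn n d /\ lt m d) end.

Lemma lt_bnd x : lt x (bnd' (c x) (kap x)).
Proof.
  destruct (kap_spec x) as [[e h]|[m [e [hm [hmx hmax]]]]]; rewrite e; simpl.
  - apply NNPP; intro N. apply (h (d0 (c x))). apply d0_spec. apply nlt_le; auto.
  - assert (Hs : Dn (c x) (epsilon inh (fun d => Dn (c x) d /\ lt m d)) /\ lt m (epsilon inh (fun d => Dn (c x) d /\ lt m d))).
    { apply epsilon_spec. apply (proj1 (Dn_club (c x)) m). }
    destruct Hs as [h1 h2]. apply NNPP; intro N. apply nlt_le in N; auto.
    pose proof (hmax _ h1 N). eapply le_nlt; eauto.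
Qed.

Definition idx x := segi T lt HT (bnd' (c x) (kap x)) x.

Definition Bprop x (l : list T) := forall y, G x y -> c y = c x ->
  (match kap x with Some m => lt y m | None => False end) -> In y l.

Definition Bl x := epsilon (inhabits []) (Bprop x).

Lemma Bl_spec x : Bprop x (Bl x).
Proof.
  unfold Bl. apply epsilon_spec. unfold Bprop.
  destruct (kap_spec x) as [[e h]|[m [e [hm [hmx hmax]]]]]; rewrite e.
  - exists []; intros; contradiction.
  - destruct (key_finite x m hm hmx) as [l hl]. exists l; auto.
Qed.

Definition Phik (x : T) (s : T -> nat) : nat :=
  Datatypes.S (list_max (map (fun y => if excluded_middle_informative (lt y x) then s y else 0) (Bl x))).

Lemma Phik_ext x s s' : (forall y, lt y x -> s y = s' y) -> Phik x s = Phik x s'.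
Proof.
  intros H. unfold Phik. f_equal. f_equal. apply map_ext. intro y.
  destruct (excluded_middle_informative (lt y x)); auto.
Qed.

Lemma in_list_max (f : T -> nat) l y : In y l -> f y <= list_max (map f l).
Proof.
  intro h. pose proof (proj1 (list_max_le (map f l) _) (le_n _)) as H.
  rewrite Forall_forall in H. apply H. apply in_map; auto.
Qed.

Lemma aux_col (k : T -> nat) (Hk : forall x, k x = Phik x k) x y :
  lt y x -> G x y -> c y = c x -> idx y = idx x -> k y < k x.
Proof.
  intros hyx gxy cyx ixy.
  destruct (kap_spec x) as [[e h]|[m [e [hm [hmx hmax]]]]].
  - exfalso. assert (ey : kap y = None).
    { destruct (kap_spec y) as [[e' _]|[m' [e' [hm' [hmy _]]]]]; auto.
      exfalso. rewrite cyx in hm'. apply (h m' hm'). left. eapply le_lt_tr; eauto. }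
    unfold idx in ixy. rewrite e, ey, cyx in ixy.
    pose proof (lt_bnd x) as bx. pose proof (lt_bnd y) as byy. rewrite e in bx. rewrite ey, cyx in byy.
    apply segi_inj in ixy; auto. subst. eapply lt_irr; eauto.
  - destruct (classic (lt y m)) as [hl|hl].
    + rewrite (Hk x). unfold Phik. apply Nat.lt_succ_r.
      pose proof (Bl_spec x y gxy cyx) as hb. rewrite e in hb. specialize (hb hl).
      pose proof (in_list_max (fun y0 => if excluded_middle_informative (lt y0 x) then k y0 else 0) _ _ hb) as hh.
      simpl in hh. destruct (excluded_middle_informative (lt y x)); [auto|contradiction].
    + exfalso. apply nlt_le in hl; auto.
      assert (ey : kap y = Some m).
      { destruct (kap_spec y) as [[e' h']|[m' [e' [hm' [hmy hmax']]]]].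
        - exfalso. rewrite cyx in h'. apply (h' m hm hl).
        - rewrite e'. f_equal. rewrite cyx in hm', hmax'.
          pose proof (hmax' m hm hl) as h1.
          assert (h2 : le T lt m' m) by (apply hmax; auto; left; eapply le_lt_tr; eauto).
          destruct h1 as [h1|h1]; auto. exfalso; eapply le_nlt; eauto. }
      unfold idx in ixy. rewrite e, ey, cyx in ixy.
      pose proof (lt_bnd x) as bx. pose proof (lt_bnd y) as byy. rewrite e in bx. rewrite ey, cyx in byy.
      apply segi_inj in ixy; auto. subst. eapply lt_irr; eauto.
Qed.

Lemma colorable_nat : colorable_by G nat.
Proof.
  destruct (wf_rec lt (om_wf _ _ HT) 0 Phik Phik_ext) as [k Hk].
  exists (fun x => Cantor.to_nat (c x, Cantor.to_nat (idx x, k x))).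
  intros u v guv e. apply (f_equal Cantor.of_nat) in e. rewrite !Cantor.cancel_of_to in e.
  pose proof (f_equal fst e) as e1. pose proof (f_equal snd e) as e2. cbn [fst snd] in e1, e2. clear e.
  apply (f_equal Cantor.of_nat) in e2. rewrite !Cantor.cancel_of_to in e2.
  pose proof (f_equal fst e2) as e4. pose proof (f_equal snd e2) as e3. cbn [fst snd] in e4, e3. clear e2. rename e4 into e2. destruct HG as [Hsym Hirr].
  destruct (om_total _ _ HT u v) as [h|[h|h]].
  - pose proof (aux_col k Hk v u h (Hsym _ _ guv) e1 e2). lia.
  - subst; eapply Hirr; eauto.
  - pose proof (aux_col k Hk u v h guv (eq_sym e1) (eq_sym e2)). lia.
Qed.
End WithSg.

Theorem core_thm : exists D, orientation G D /\
  forall c : T -> nat, (forall n, acyclic_set D (fun v => c v = n)) -> colorable_by G nat.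
Proof.
  destruct (wf_rec lt (om_wf _ _ HT) (fun _ => true) Phi Phi_ext) as [sg Hsg].
  exists (arc_of sg). split. apply arc_orient. intros c Hac. eapply colorable_nat; eauto.
Qed.

End Core.

Section Card.
Context (W : Type) (lt : W -> W -> Prop) (HW : is_omega1 W lt).

Lemma no_max a : exists y, lt a y.
Proof.
  apply NNPP; intro N. apply (om_uncountable _ _ HW).
  exists (fun y => match excluded_middle_informative (lt y a) with left _ => Datatypes.S (segi W lt HW a y) | right _ => 0 end).
  intros x y. destruct (excluded_middle_informative (lt x a)) as [hx|hx];
  destruct (excluded_middle_informative (lt y a)) as [hy|hy]; intro e; try discriminate.
  - injection e as e. eapply segi_inj; eauto.
  - destruct (nlt_le W lt HW _ _ hx) as [h|h]; [exfalso; apply N; eauto|].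
    destruct (nlt_le W lt HW _ _ hy) as [h'|h']; [exfalso; apply N; eauto|]. congruence.
Qed.

Lemma card_lt_nat : card_lt nat W.
Proof.
  pose proof (T_inh W lt HW) as inh. destruct inh as [t0].
  set (nx := fun a => epsilon (inhabits t0) (lt a)).
  assert (Hnx : forall a, lt a (nx a)) by (intro a; apply epsilon_spec, no_max).
  set (e := fun n => Nat.iter n nx t0).
  split.
  - exists e. intros m n h. destruct (Nat.lt_trichotomy m n) as [h'|[h'|h']]; auto; exfalso.
    + pose proof (incr_mono W lt HW e (fun k => Hnx _) m n h'). rewrite h in H. eapply lt_irr; eauto.
    + pose proof (incr_mono W lt HW e (fun k => Hnx _) n m h'). rewrite h in H. eapply lt_irr; eauto.
  - apply (om_uncountable _ _ HW).
Qed.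

Lemma card_lt_countable (K : Type) : card_lt K W -> exists h : K -> nat, injective_fun h.
Proof.
  intros [[i Hi] Hno].
  assert (Hb : exists b, forall k, lt (i k) b).
  { apply NNPP; intro N. apply Hno.
    assert (Hub : forall b, exists k, le W lt b (i k)).
    { intro b. apply NNPP; intro N2. apply N. exists b. intro k. apply NNPP; intro N3. apply N2. exists k.
      apply nlt_le; auto. }
    pose proof (T_inh W lt HW) as inh.
    set (dec := fun w j => epsilon inh (fun u => lt u w /\ segi W lt HW w u = j)).
    set (Phi0 := fun (w : W) (s : W -> W) =>
      epsilon inh (fun y => (exists k, i k = y) /\ forall w', lt w' w -> lt (s w') y)).
    assert (Hext : forall x s s', (forall y, lt y x -> s y = s' y) -> Phi0 x s = Phi0 x s').
    { intros x s s' H. unfold Phi0. f_equal. apply functional_extensionality. intro y.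
      apply propositional_extensionality. split; intros [h1 h2]; split; auto; intros w' hw';
      [rewrite <- H | rewrite H]; auto. }
    destruct (wf_rec lt (om_wf _ _ HW) (epsilon inh (fun _ => True)) Phi0 Hext) as [h Hh].
    assert (Hdec : forall w u, lt u w -> dec w (segi W lt HW w u) = u).
    { intros w u hu. unfold dec.
      destruct (epsilon_spec inh (fun u' => lt u' w /\ segi W lt HW w u' = segi W lt HW w u) (ex_intro _ u (conj hu eq_refl))) as [h1 h2].
      eapply segi_inj; eauto. }
    assert (Hspec : forall w, (exists k, i k = h w) /\ forall w', lt w' w -> lt (h w') (h w)).
    { intro w. rewrite (Hh w). unfold Phi0 at 1. apply (epsilon_spec inh (fun y => (exists k, i k = y) /\ forall w', lt w' w -> lt (h w') y)).
      destruct (seq_bounded W lt HW (fun j => h (dec w j))) as [b Hbd].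
      destruct (Hub b) as [k hk]. exists (i k). split; eauto.
      intros w' hw'. eapply lt_le_tr; eauto. rewrite <- (Hdec w w' hw'). apply Hbd. }
    exists (fun w => proj1_sig (constructive_indefinite_description _ (proj1 (Hspec w)))).
    intros x y e.
    destruct (constructive_indefinite_description _ (proj1 (Hspec x))) as [kx hx].
    destruct (constructive_indefinite_description _ (proj1 (Hspec y))) as [ky hy]. simpl in e. subst ky.
    destruct (om_total _ _ HW x y) as [h'|[h'|h']]; auto; exfalso.
    - pose proof (proj2 (Hspec y) x h'). rewrite <- hx, <- hy in H. eapply lt_irr; eauto.
    - pose proof (proj2 (Hspec x) y h'). rewrite <- hx, <- hy in H. eapply lt_irr; eauto. }
  destruct Hb as [b Hb]. exists (fun k => segi W lt HW b (i k)). intros x y e.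
  apply Hi. eapply segi_inj; [apply Hb | apply Hb | exact e].
Qed.
End Card.

Section Transfer.
Context (W : Type) (lt : W -> W -> Prop) (HW : is_omega1 W lt)
  (V : Type) (f : V -> W) (Hf : bijective_fun f).

Definition ginv (w : W) : V := proj1_sig (constructive_indefinite_description _ (proj2 Hf w)).
Lemma f_ginv w : f (ginv w) = w.
Proof. unfold ginv. destruct (constructive_indefinite_description _ _); auto. Qed.
Lemma ginv_f v : ginv (f v) = v.
Proof. apply (proj1 Hf). apply f_ginv. Qed.

Definition ltV (u v : V) := lt (f u) (f v).

Lemma om_V : is_omega1 V ltV.
Proof.
  destruct HW as [h1 h2 h3 h4 h5 h6]. constructor.
  - unfold ltV; intro a; apply h1.
  - unfold ltV; intros a b c; apply h2.
  - intros a b. destruct (h3 (f a) (f b)) as [h|[h|h]]; auto. right; left; apply (proj1 Hf); auto.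
  - exact (wf_inverse_image V W lt f h4).
  - intros [h Hh]. apply h5. exists (fun w => h (ginv w)). intros x y e. apply Hh in e.
    rewrite <- (f_ginv x), <- (f_ginv y), e; auto.
  - intro b. destruct (h6 (f b)) as [h Hh].
    exists (fun p : {a : V | ltV a b} => h (exist (fun w => lt w (f b)) (f (proj1_sig p)) (proj2_sig p))). intros [x px] [y py] e.
    apply Hh in e. simpl in e. injection e as e. apply (proj1 Hf) in e. subst.
    f_equal. apply proof_irrelevance.
Qed.

Lemma diamond_V (S : W -> nat -> W -> Prop) (HS1 : forall b n a, S b n a -> lt a b)
  (HS2 : forall X : W -> Prop, exists C : W -> Prop, club lt C /\
      forall b, C b -> exists n, forall a, S b n a <-> (X a /\ lt a b)) :
  (forall b n a, S (f b) n (f a) -> ltV a b) /\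
  (forall X : V -> Prop, exists C : V -> Prop, club ltV C /\
      forall b, C b -> exists n, forall a, S (f b) n (f a) <-> (X a /\ ltV a b)).
Proof.
  split.
  - intros b n a h. apply HS1 in h. exact h.
  - intro X. destruct (HS2 (fun w => X (ginv w))) as [C [[Cu Cc] HC]].
    exists (fun v => C (f v)). split; [split|].
    + intro a. destruct (Cu (f a)) as [c [hc hl]]. exists (ginv c). unfold ltV. rewrite f_ginv. split; auto.
    + intros b [c [hc hl]] hlim. apply Cc.
      * exists (f c); auto.
      * intros a ha. destruct (hlim (ginv a)) as [c' [hc' [h1 h2]]].
        { unfold ltV. rewrite f_ginv. auto. }
        exists (f c'). unfold ltV in h1. rewrite f_ginv in h1. auto.
    + intros b hb. destruct (HC (f b) hb) as [n Hn]. exists n. intro a.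
      rewrite Hn. rewrite ginv_f. tauto.
Qed.
End Transfer.

Lemma cycle_nonempty {V} (G D : V -> V -> Prop) (HG : undirected_graph G) (HD : orientation G D)
  (A : V -> Prop) x l : NoDup (x :: l) -> dpath D x l -> D (last l x) x -> exists y l', l = y :: l' /\ D x y /\ x <> y.
Proof.
  intros hn hp hl. destruct l as [|y l'].
  - simpl in hl. apply (proj1 HD) in hl. exfalso; apply (proj2 HG x hl).
  - exists y, l'. split; auto. destruct hp as [h _]. split; auto. inversion hn; subst. intro e; subst; apply H1; left; auto.
Qed.

Lemma Forall_impl' {A} (P Q : A -> Prop) l : (forall a, P a -> Q a) -> Forall P l -> Forall Q l.
Proof. intros H h. induction h; constructor; auto. Qed.

Theorem corollary4p9 (W : Type) (lt : W -> W -> Prop)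
  (HW : is_omega1 W lt) (Hdiamond : diamond_plus W lt)
  (V : Type) (G : V -> V -> Prop) (HG : undirected_graph G)
  (HV : exists f : V -> W, bijective_fun f) :
  vec_chi_eq G W <-> chi_eq G W.
Proof.
  destruct HV as [f Hf].
  split.
  - intros [_ Hvec]. split.
    + exists f. intros u v guv e. apply (proj1 Hf) in e. subst. apply (proj2 HG v guv).
    + intros K HK [c Hc]. destruct (Hvec K HK) as [D [HD Hnd]]. apply Hnd.
      exists (fun k v => c v = k). split.
      * intros k [x [l [hn [hf [hp hl]]]]].
        destruct (cycle_nonempty G D HG HD (fun _ => True) x l hn hp hl) as [y [l' [-> [hxy _]]]].
        inversion hf; subst. inversion H2; subst. apply (Hc x y); [apply (proj1 HD); auto | congruence].
      * intro v. exists (c v); auto.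
  - intros [_ Hchi]. split.
    + intros D HD. exists (fun w v => f v = w). split.
      * intros w [x [l [hn [hf [hp hl]]]]].
        destruct (cycle_nonempty G D HG HD (fun _ => True) x l hn hp hl) as [y [l' [-> [hxy ne]]]].
        inversion hf; subst. inversion H2; subst. apply ne. apply (proj1 Hf). congruence.
      * intro v. exists (f v); auto.
    + intros K HK.
      destruct Hdiamond as [S [HS1 HS2]].
      assert (HS2' : forall X : W -> Prop, exists C : W -> Prop, club lt C /\
          forall b, C b -> exists n, forall a, S b n a <-> (X a /\ lt a b)).
      { intro X. destruct (HS2 X) as [C [hC H]]. exists C. split; auto. intros b hb. apply (H b hb). }
      destruct (diamond_V W lt V f Hf S HS1 HS2') as [HS1V HS2V].
      destruct (core_thm V (ltV W lt V f) (om_V W lt HW V f Hf) (fun b n a => S (f b) n (f a)) HS2V G HG)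
        as [D [HD Hcore]].
      exists D. split; auto. intros [F [HFac HFcov]].
      destruct (card_lt_countable W lt HW K HK) as [hK HhK].
      set (ch := fun v => proj1_sig (constructive_indefinite_description _ (HFcov v))).
      assert (Hch : forall v, F (ch v) v) by (intro v; unfold ch; destruct (constructive_indefinite_description _ _); auto).
      apply (Hchi nat (card_lt_nat W lt HW)).
      apply (Hcore (fun v => hK (ch v))).
      intros n [x [l [hn [hf [hp hl]]]]]. apply (HFac (ch x)). exists x, l. split; auto. split; auto.
      assert (hx : hK (ch x) = n) by (inversion hf; auto).
      eapply Forall_impl'; [|exact hf]. simpl. intros a ha. rewrite <- hx in ha. apply HhK in ha. rewrite <- ha. apply Hch.
Qed.
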